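(* Let $a_1,a_2\in\Sigma$ with $a_1\neq a_2$, let $n_1\ge1$, $u\in\{a_1,a_2\}^+$ and $v\in(\Sigma\setminus\{a_1,a_2\})^+$, and let $w=a_1^{n_1}a_2uv$. Then there exists an element of $\mathtt{BR}(w)$ which is not rich.
   Context: $\Sigma$ is an alphabet; $X^+$ denotes the set of nonempty words over a set of letters $X$. For a word $w=w_1\cdots w_n$, $w^R=w_n\cdots w_1$; $w$ is a palindrome if $w=w^R$; a factor of $w$ is a word $u$ with $w=puq$. A word $w$ is rich if the number of distinct nonempty palindromic factors of $w$ equals $|w|$. The block reversal of a nonempty word $w$ is $\mathtt{BR}(w)=\{B_t\cdots B_1 : w=B_1\cdots B_t,\ t\ge1,\ \text{each } B_i \text{ nonempty}\}$. *)

(* Defs.v *)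
From mathcomp Require Import all_boot.
Set Implicit Arguments. Unset Strict Implicit. Unset Printing Implicit Defensive.

Section Words.
Variable Sigma : eqType.

Definition palindrome (w : seq Sigma) : bool := rev w == w.

Definition factors (w : seq Sigma) : seq (seq Sigma) :=
  [seq take l (drop i w) | i <- iota 0 (size w).+1, l <- iota 0 (size w).+1].

Definition pal_factors (w : seq Sigma) : seq (seq Sigma) :=
  undup [seq f <- factors w | (f != [::]) && palindrome f].

Definition rich (w : seq Sigma) : Prop := size (pal_factors w) = size w.

(* x is a block reversal of w: w = B_1 ... B_t (t >= 1, B_i nonempty)
   and x = B_t ... B_1 *)
Definition in_BR (w x : seq Sigma) : Prop :=
  exists bs : seq (seq Sigma),
    [/\ bs != [::], all (fun b => b != [::]) bs,
        flatten bs = w & x = flatten (rev bs)].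

End Words.

(* Main.v *)
Require Import Defs.
From mathcomp Require Import all_boot.

Section Aux.
Variable Sigma : eqType.
Implicit Types (w q g : seq Sigma).

Lemma mem_factors w f : (f \in factors w) = infix f w.
Proof.
apply/idP/idP.
- case/allpairsP => [[i l] /= [_ _ ->]].
  apply: (@infix_trans _ (drop i w)); [exact: infix_take | exact: infix_drop].
- move=> H; apply/allpairsP; exists (infix_index f w, size f); split.
  + by rewrite mem_iota add0n ltnS infixTindex.
  + by rewrite mem_iota add0n ltnS size_infix.
  + by apply/esym/eqP; rewrite -infixE.
Qed.

Lemma mem_pal w f :
  (f \in pal_factors w) = [&& f != [::], palindrome f & infix f w].
Proof. by rewrite /pal_factors mem_undup mem_filter mem_factors -andbA. Qed.

Lemma cat_split (a b c d : seq Sigma) : a ++ b = c ++ d ->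
  (exists h, b = h ++ d /\ c = a ++ h) \/ (exists h, d = h ++ b /\ a = c ++ h).
Proof.
elim: a c => [|x a IH] [|y c] /=.
- by move=> ->; left; exists [::].
- by move=> ->; left; exists (y :: c).
- by move=> <-; right; exists (x :: a).
- case=> -> E; case: (IH _ E) => [[h [E1 E2]]|[h [E1 E2]]].
  + by left; exists h; rewrite E1 E2.
  + by right; exists h; rewrite E1 E2.
Qed.

Arguments cat_split {a b c d}.

Lemma suffix_le g1 g2 p : suffix g1 p -> suffix g2 p -> size g1 <= size g2 ->
  suffix g1 g2.
Proof.
rewrite /suffix !prefixE !size_rev => /eqP E1 /eqP E2 le.
by rewrite -E2 take_takel // E1.
Qed.

Arguments suffix_le {g1 g2 p}.

Lemma suffix_eq_size g1 g2 p : suffix g1 p -> suffix g2 p ->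
  size g1 = size g2 -> g1 = g2.
Proof.
move=> S1 S2 E; have := suffix_le S1 S2 (eq_leq E).
by rewrite suffixE E subnn drop0 => /eqP.
Qed.

Arguments suffix_eq_size {g1 g2 p}.

Lemma pal_short q c g1 g2 : palindrome g1 -> palindrome g2 ->
  suffix g1 (rcons q c) -> suffix g2 (rcons q c) -> size g1 < size g2 ->
  infix g1 q.
Proof.
move=> /eqP P1 /eqP P2 S1 S2 lt.
have := suffix_le S1 S2 (ltnW lt).
rewrite /suffix P1 P2 => /prefixP [h Eh].
case/lastP: h Eh => [|h' y] Eh.
  by move: lt; rewrite Eh cats0 ltnn.
case/suffixP: S2 => s' E.
move: E; rewrite Eh -rcons_cat -rcons_cat => /rcons_inj [-> _].
exact: infix_infix.
Qed.

Arguments pal_short {q c g1 g2}.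

Lemma pal_step q c :
  size (pal_factors (rcons q c)) <= (size (pal_factors q)).+1.
Proof.
case: (boolP (all (fun g => g \in pal_factors q) (pal_factors (rcons q c))))
  => [/allP H| /allPn [g0 g0in g0n]].
  by rewrite (leq_trans _ (leqnSn _)) // uniq_leq_size // undup_uniq.
have -> : (size (pal_factors q)).+1 = size (g0 :: pal_factors q) by [].
apply: uniq_leq_size; first exact: undup_uniq.
move=> g gin; rewrite in_cons.
have [gq|gn] := boolP (g \in pal_factors q); first by apply/orP; right.
apply/orP; left.
move: gin g0in; rewrite !mem_pal => /and3P[gne gp gi] /and3P[g0ne g0p g0i].
move: gn g0n; rewrite !mem_pal gne gp g0ne g0p /= => gn g0n.
move: gi g0i; rewrite !infix_rconsl (negbTE gn) (negbTE g0n) !orbF => gs g0s.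
case: (ltngtP (size g) (size g0)) => hs.
- by rewrite (pal_short gp g0p gs g0s hs) in gn.
- by rewrite (pal_short g0p gp g0s gs hs) in g0n.
- by apply/eqP; apply: suffix_eq_size gs g0s hs.
Qed.

Lemma pal_bound q : size (pal_factors q) <= size q.
Proof.
elim/last_ind: q => [|q c IH]; first by [].
by rewrite size_rcons (leq_trans (pal_step q c)).
Qed.

Lemma pal_app (p t : seq Sigma) : size (pal_factors (p ++ t)) <= size (pal_factors p) + size t.
Proof.
elim/last_ind: t => [|t y IH]; first by rewrite cats0 addn0.
by rewrite -rcons_cat size_rcons addnS (leq_trans (pal_step _ _)).
Qed.

Lemma nonrich q c t :
  (forall g, g != [::] -> palindrome g -> suffix g (rcons q c) -> infix g q) ->
  ~ rich (rcons q c ++ t).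
Proof.
move=> H; rewrite /rich => E.
have h1 : size (pal_factors (rcons q c)) <= size (pal_factors q).
  apply: uniq_leq_size; first exact: undup_uniq.
  move=> g; rewrite !mem_pal => /and3P[gne gp]; rewrite infix_rconsl.
  case/orP => [/(H g gne gp)|] -> ; by rewrite gne gp.
have := pal_app (rcons q c) t; rewrite E size_cat size_rcons => h2.
have := leq_trans h2 (leq_add h1 (leqnn (size t))).
by rewrite addSn ltnNge leq_add2r pal_bound.
Qed.

Lemma find_split (P : pred Sigma) x1 w1 x2 w2 d1 d2 :
  all P x1 -> all P x2 -> ~~ P d1 -> ~~ P d2 ->
  x1 ++ d1 :: w1 = x2 ++ d2 :: w2 -> x1 = x2.
Proof.
move=> h1 h2 n1 n2 E.
have f1 : find (predC P) (x1 ++ d1 :: w1) = size x1.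
  by rewrite find_cat has_predC h1 /= n1 addn0.
have f2 : find (predC P) (x2 ++ d2 :: w2) = size x2.
  by rewrite find_cat has_predC h2 /= n2 addn0.
have s : size x1 = size x2 by rewrite -f1 -f2 E.
have := congr1 (take (size x1)) E.
by rewrite take_size_cat // s take_size_cat.
Qed.

Arguments find_split {P x1 w1 x2 w2 d1 d2}.

Lemma defect (P : pred Sigma) u0 v m f c g :
  all P u0 -> P c -> P f -> f != c -> v != [::] -> all (predC P) v -> 0 < m ->
  g != [::] -> palindrome g ->
  suffix g (rcons (rcons u0 c ++ v ++ nseq m f) c) ->
  infix g (rcons u0 c ++ v ++ nseq m f).
Proof.
move=> Pu Pc Pf fc vne Pv m0 gne /eqP gp /suffixP [pre E].
case/lastP: g gne gp E => [//|g' l] _ gp.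
rewrite -rcons_cat => /rcons_inj [Eq El]; subst l.
have Hst : forall d s, g' = d :: s -> d = c.
  move=> d s Eg; move: gp; rewrite rev_rcons Eg /=; by case=> ->.
move: Eq; rewrite catA => /esym /cat_split [[h [Eg Eh]]|[h [Eh Epre]]].
- case: (cat_split (esym Eh)) => [[h1 [Eh1 Eu]]|[h2 [Ev Epre]]].
  + case/lastP: h1 Eh1 Eu => [|h1' l'] Eh1 Eu.
    * case: v vne Pv Eh1 Eh => [//|d v'] _ /= /andP [Pd _] Eh1 _.
      have := Hst d (v' ++ nseq m f); rewrite Eg Eh1 => /(_ erefl) dc.
      by move: Pd; rewrite /= dc Pc.
    * move: Eu; rewrite -rcons_cat => /rcons_inj [Eu0 El]; subst l'.
      have E2 : rcons h1' c ++ (v ++ rcons (nseq m f) c)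
              = (c :: nseq m f) ++ (rev v ++ rev (rcons h1' c)).
        move: gp; rewrite Eg Eh1 rev_rcons !rev_cat rev_nseq => /esym.
        by rewrite -!catA -!rcons_cat /= catA.
      case: v vne Pv E2 Eh Eh1 => [//|d v'] _ /= /andP [Pd Pv'] E2 _ _.
      case Erv: (rev (d :: v')) E2 => [|d' rv]; first by move: (congr1 size Erv); rewrite size_rev.
      move=> E2.
      have Pd' : ~~ P d'.
        have : d' \in rev (d :: v') by rewrite Erv mem_head.
        rewrite mem_rev inE => /orP [/eqP -> //|/(allP Pv')]. by [].
      have Ph : all P (rcons h1' c).
        by rewrite all_rcons Pc; move: Pu; rewrite Eu0 all_cat => /andP [].
      have Pn : all P (c :: nseq m f).
        by rewrite /= Pc all_nseq Pf orbT.
      move: (find_split Ph Pn Pd Pd' E2) => /(congr1 (last c)).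
      rewrite last_rcons; case: m m0 {Pn E2 Eg gp Hst} => [//|m'] _ /= cf.
      have E' : last f (nseq m' f) = f by elim: m' {cf}.
      by rewrite E' in cf; rewrite cf eqxx in fc.
  + case: h Ev Eg Eh => [|d h'] Ev Eg _.
    * case: m m0 Eg => [//|m'] _ Eg.
      have := Hst f (nseq m' f); rewrite Eg => /(_ erefl) ffc.
      by rewrite ffc eqxx in fc.
    * have Pd : ~~ P d by apply: (allP Pv); rewrite Ev mem_cat mem_head orbT.
      have := Hst d (h' ++ nseq m f); rewrite Eg => /(_ erefl) dc.
      by move: Pd; rewrite dc Pc.
- case: g' Hst Eh {gp Epre} => [|d s] Hst Eh.
  + by rewrite infix1s !mem_cat mem_rcons mem_head.
  + have : d \in nseq m f by rewrite Eh mem_cat mem_head orbT.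
    rewrite mem_nseq => /andP [_ /eqP df].
    have := Hst d s erefl; rewrite df => ffc.
    by rewrite ffc eqxx in fc.
Qed.

End Aux.

Theorem mainTheorem4 (Sigma : eqType) (a1 a2 : Sigma) (n1 : nat)
    (u v : seq Sigma) :
  a1 != a2 -> 1 <= n1 ->
  u != [::] -> all (fun c => (c == a1) || (c == a2)) u ->
  v != [::] -> all (fun c => (c != a1) && (c != a2)) v ->
  exists x : seq Sigma,
    in_BR (nseq n1 a1 ++ a2 :: u ++ v) x /\ ~ rich x.
Proof.
move=> a12 n1p une Pu vne Pv.
case: n1 n1p => [//|n] _.
pose P := fun x => (x == a1) || (x == a2).
case/lastP: u une Pu => [//|u0 e] _ Pu.
rewrite all_rcons in Pu; case/andP: Pu => Pe Pu0.
have Pv' : all (predC P) v.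
  by apply/allP => x xv; rewrite /= /P negb_or; exact: (allP Pv).
have Pa1 : P a1 by rewrite /P eqxx.
have Pa2 : P a2 by rewrite /P eqxx orbT.
case/orP: (Pe) => /eqP Ee.
- exists ((rcons u0 e ++ v) ++ ([:: a2] ++ (nseq n.+1 a1 ++ [::]))); split.
    exists [:: nseq n.+1 a1; [:: a2]; rcons u0 e ++ v]; split => //.
      by rewrite /= -size_eq0 size_cat size_rcons.
    by rewrite /= cats0.
  have -> : (rcons u0 e ++ v) ++ ([:: a2] ++ (nseq n.+1 a1 ++ [::]))
          = rcons (rcons u0 e ++ v ++ nseq 1 a2) e ++ nseq n a1.
    by rewrite Ee cats0 -!cats1 -!catA.
  apply: nonrich => g gne gp gs.
  apply: (@defect _ P) => //.
  by rewrite Ee eq_sym.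
- exists ((rcons u0 e ++ v) ++ ((nseq n.+1 a1 ++ [:: a2]) ++ [::])); split.
    exists [:: nseq n.+1 a1 ++ [:: a2]; rcons u0 e ++ v]; split => //.
      by rewrite /= -size_eq0 size_cat size_rcons.
    by rewrite /= cats0 -catA.
  have -> : (rcons u0 e ++ v) ++ ((nseq n.+1 a1 ++ [:: a2]) ++ [::])
          = rcons (rcons u0 e ++ v ++ nseq n.+1 a1) e ++ [::].
    by rewrite Ee !cats0 -!cats1 -!catA.
  apply: nonrich => g gne gp gs.
  by apply: (@defect _ P) => //; rewrite Ee.
Qed.
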